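(* For all integers $n$ and $\alpha$ with $n<\alpha\le 2^{n-1}+1$, there exists a minimal $n$-state nondeterministic finite automaton accepting an infix-closed language whose equivalent minimal deterministic finite automaton has exactly $\alpha$ states. Moreover, if a minimal $n$-state nondeterministic finite automaton accepts an infix-closed language whose equivalent minimal deterministic finite automaton has exactly $n$ states, then $n=1$.
   Context: NFAs have a single initial state and a transition function $\delta:Q\times\Sigma\to 2^Q$ that may map to the empty set (no sink state is needed or counted); DFAs are complete, so a sink state is counted. A minimal $n$-state NFA is an NFA with $n$ states such that no NFA with fewer states accepts the same language. A language $L\subseteq\Sigma^*$ is infix-closed if $xyz\in L$ implies $y\in L$ for all $x,y,z\in\Sigma^*$. *)

(* Defs.v *)
From mathcomp Require Import all_boot.
Set Implicit Arguments. Unset Strict Implicit. Unset Printing Implicit Defensive.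

Definition lang (A : finType) := seq A -> bool.

Definition infix_closed (A : finType) (L : lang A) : Prop :=
  forall x y z : seq A, L (x ++ y ++ z) -> L y.

Record nfa (A : finType) := NFA {
  nfa_state : finType;
  nfa_init : nfa_state;
  nfa_final : {set nfa_state};
  nfa_trans : nfa_state -> A -> {set nfa_state} }.

Fixpoint nfa_run (A : finType) (N : nfa A) (X : {set nfa_state N}) (w : seq A)
  : {set nfa_state N} :=
  match w with
  | [::] => X
  | a :: w' => @nfa_run A N (\bigcup_(q in X) @nfa_trans A N q a) w'
  end.

Definition nfa_lang (A : finType) (N : nfa A) : lang A :=
  fun w => [exists q in @nfa_run A N [set nfa_init N] w, q \in nfa_final N].

Definition nfa_size (A : finType) (N : nfa A) : nat := #|nfa_state N|.

Definition nfa_minimal (A : finType) (N : nfa A) : Prop :=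
  forall M : nfa A, (forall w, nfa_lang M w = nfa_lang N w) ->
    nfa_size N <= nfa_size M.

(* Complete DFA (a sink state, if any, is counted among the states). *)
Record dfa (A : finType) := DFA {
  dfa_state : finType;
  dfa_init : dfa_state;
  dfa_final : {set dfa_state};
  dfa_trans : dfa_state -> A -> dfa_state }.

Definition dfa_lang (A : finType) (D : dfa A) : lang A :=
  fun w => foldl (@dfa_trans A D) (dfa_init D) w \in dfa_final D.

Definition dfa_size (A : finType) (D : dfa A) : nat := #|dfa_state D|.

Definition min_dfa_size (A : finType) (L : lang A) (k : nat) : Prop :=
  (exists D : dfa A, dfa_size D = k /\ forall w, dfa_lang D w = L w) /\
  (forall D : dfa A, (forall w, dfa_lang D w = L w) -> k <= dfa_size D).

(* Main.v *)
Require Import Defs.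
From mathcomp Require Import all_boot zify.
From Stdlib Require Import Classical.
Set Implicit Arguments. Unset Strict Implicit. Unset Printing Implicit Defensive.

Section Gen.
Variable A : finType.

Lemma run_cat (N : nfa A) (X : {set nfa_state N}) u v :
  nfa_run X (u ++ v) = nfa_run (nfa_run X u) v.
Proof. by elim: u X => //= a u IH X. Qed.

Lemma runP (N : nfa A) (X : {set nfa_state N}) v x :
  reflect (exists2 q, q \in X & x \in nfa_run [set q] v) (x \in nfa_run X v).
Proof.
elim: v X x => [|a v IH] X x /=.
  apply: (iffP idP) => [xX|[q qX]]; first by exists x; rewrite ?set11.
  by rewrite inE => /eqP ->.
apply: (iffP (IH _ _)).
- move=> [p /bigcupP [q qX pq] xp]. exists q => //. rewrite big_set1. by apply/IH; exists p.
- move=> [q qX]. rewrite big_set1 => /IH [p pq xp]. exists p => //. by apply/bigcupP; exists q.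
Qed.

Lemma run_mono (N : nfa A) (X Y : {set nfa_state N}) v x :
  X \subset Y -> x \in nfa_run X v -> x \in nfa_run Y v.
Proof. move=> /subsetP XY /runP [q /XY qY xq]; apply/runP; by exists q. Qed.

Lemma lang_cat (N : nfa A) u v :
  nfa_lang N (u ++ v) =
  [exists s in nfa_run [set nfa_init N] u,
     [exists q in nfa_run [set s] v, q \in nfa_final N]].
Proof.
rewrite /nfa_lang run_cat.
apply/existsP/existsP => [[q /andP [/runP [s sX qs] qF]]|[s /andP [sX /existsP [q /andP[qs qF]]]]].
  exists s; rewrite sX; apply/existsP; exists q; by rewrite qs.
exists q; rewrite qF andbT; apply/runP; by exists s.
Qed.

Lemma fooling (N : nfa A) (I : finType) (x y : I -> seq A) :
  (forall p, nfa_lang N (x p ++ y p)) ->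
  (forall p q, p != q -> ~~ (nfa_lang N (x p ++ y q) && nfa_lang N (x q ++ y p))) ->
  #|I| <= nfa_size N.
Proof.
move=> Hacc Hf.
have H p : exists s, (s \in nfa_run [set nfa_init N] (x p)) &&
   [exists q in nfa_run [set s] (y p), q \in nfa_final N].
  by have := Hacc p; rewrite lang_cat => /existsP.
pose f p := xchoose (H p).
rewrite /nfa_size; apply: (leq_card f) => p q fpq.
apply/eqP; apply/negPn/negP => /Hf; apply/negP/negPn.
have /andP [p1 p2] := xchooseP (H p).
have /andP [q1 q2] := xchooseP (H q).
rewrite !lang_cat; apply/andP; split; apply/existsP.
  exists (f p); rewrite p1 /=. move: q2. by rewrite -/(f q) -fpq.
exists (f q); rewrite q1 /=. move: p2. by rewrite -/(f p) fpq.
Qed.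

Definition dacc (D : dfa A) s v := foldl (@dfa_trans A D) s v \in dfa_final D.

Lemma dfa_lower (D D' : dfa A) (r : dfa_state D -> seq A) :
  (forall s, foldl (@dfa_trans A D) (dfa_init D) (r s) = s) ->
  (forall s t : dfa_state D, (forall v, dacc s v = dacc t v) -> s = t) ->
  (forall w, dfa_lang D' w = dfa_lang D w) ->
  dfa_size D <= dfa_size D'.
Proof.
move=> Hr Hd Hl; pose f s := foldl (@dfa_trans A D') (dfa_init D') (r s).
apply: (leq_card f) => s t fst; apply: Hd => v.
have E z : dacc z v = dfa_lang D' (r z ++ v).
  by rewrite Hl /dfa_lang foldl_cat Hr.
by rewrite !E /dfa_lang !foldl_cat -/(f s) -/(f t) fst.
Qed.

End Gen.
Arguments runP {A N X v x}.

Section Part2.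
Variable A : finType.

Definition nfa_all (b : bool) : nfa A :=
  @NFA A unit tt (if b then setT else set0) (fun _ _ => setT).

Lemma nfa_all_lang b w : nfa_lang (nfa_all b) w = b.
Proof.
have H: forall X : {set unit}, tt \in X -> tt \in @nfa_run A (nfa_all b) X w.
  elim: w => //= a w IH X tX; apply: IH; apply/bigcupP; exists tt => //; by rewrite inE.
rewrite /nfa_lang; case: b H => H /=.
  apply/existsP; exists tt; rewrite inE andbT; apply: H; by rewrite set11.
apply/existsP => [[q]]; by rewrite inE andbF.
Qed.

Lemma part2 (N : nfa A) n : nfa_size N = n -> nfa_minimal N ->
  infix_closed (nfa_lang N) -> min_dfa_size (nfa_lang N) n -> n = 1.
Proof.
move=> Hs Hm Hi [[D [HD HL]] _].
have n1 : 0 < n by rewrite -Hs /nfa_size; apply/card_gt0P; exists (nfa_init N).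
have le1 b : (forall w, nfa_lang N w = b) -> n = 1.
  move=> Hb; apply/eqP; rewrite eqn_leq n1 andbT -Hs.
  have := Hm (nfa_all b); rewrite /nfa_size card_unit; apply => w.
  by rewrite nfa_all_lang Hb.
case E0: (nfa_lang N [::]); last first.
  apply: (le1 false) => w; apply/negbTE/negP => Hw; move: E0.
  have := Hi w [::] [::]; rewrite /= cats0 => /(_ Hw) ->; done.
destruct (classic (forall w, nfa_lang N w = true)) as [Hall|Hn].
  exact: le1 Hall.
have [w1 Hw1] := not_all_ex_not _ _ Hn.
have {}Hw1 : nfa_lang N w1 = false by move: Hw1; case: (nfa_lang N w1).
set q := foldl (@dfa_trans A D) (dfa_init D) w1.
have dead u v : foldl (@dfa_trans A D) (dfa_init D) u = q -> nfa_lang N (u ++ v) = false.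
  move=> Hu; rewrite -HL /dfa_lang foldl_cat Hu -foldl_cat.
  rewrite -/(dfa_lang D (w1 ++ v)) HL; apply/negbTE/negP => /(Hi [::] w1 v).
  by rewrite Hw1.
have iq : dfa_init D != q.
  apply/eqP => iq; move: (dead [::] [::] iq); by rewrite /= E0.
pose S := {s : dfa_state D | s != q}.
pose M := @NFA A S (Sub (dfa_init D) iq) [set s : S | val s \in dfa_final D]
  (fun s a => [set s' : S | val s' == dfa_trans (val s) a]).
have sound u (s : S) x : x \in @nfa_run A M [set s] u -> val x = foldl (@dfa_trans A D) (val s) u.
  elim: u s x => [|a u IH] s x /=; first by rewrite inE => /eqP ->.
  rewrite big_set1 => /(runP (N:=M)) [p]; rewrite inE => /eqP pt /IH ->. rewrite -pt. done.
have compl u (s : S) w : foldl (@dfa_trans A D) (dfa_init D) w = val s ->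
    nfa_lang N (w ++ u) ->
    exists2 x, x \in @nfa_run A M [set s] u & val x = foldl (@dfa_trans A D) (val s) u.
  elim: u s w => [|a u IH] s w Hw Hl /=; first by exists s; rewrite ?set11.
  have tq : dfa_trans (val s) a != q.
    apply/eqP => tq; move: (dead (w ++ [:: a]) u); rewrite foldl_cat Hw /= tq.
    by rewrite -catA /= Hl => /(_ erefl).
  have Hw' : foldl (@dfa_trans A D) (dfa_init D) (w ++ [:: a]) = val (Sub (dfa_trans (val s) a) tq : S).
    by rewrite foldl_cat Hw.
  have Hl' : nfa_lang N ((w ++ [:: a]) ++ u) by rewrite -catA.
  have [x xr xv] := IH (Sub (dfa_trans (val s) a) tq) (w ++ [:: a]) Hw' Hl'.
  exists x => //; rewrite big_set1; apply: run_mono xr.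
  by rewrite sub1set inE.
have LM u : nfa_lang M u = nfa_lang N u.
  apply/idP/idP.
    move=> /existsP [x /andP [xr]]; rewrite inE (sound _ _ _ xr) /= => Hf.
    by rewrite -HL.
  move=> Hu; have [x xr xv] := compl u (Sub (dfa_init D) iq) [::] erefl Hu.
  apply/existsP; exists x; rewrite xr inE xv /=.
  by rewrite -HL in Hu.
have := Hm M LM; rewrite Hs /nfa_size card_sig cardC1 -/(dfa_size D) HD.
move=> H; move: n1 H; case: (n) => // n0 _ /=; by rewrite ltnn.
Qed.

End Part2.

Lemma set1_neq0 (T : finType) (a : T) : [set a] != set0.
Proof. by apply/set0Pn; exists a; rewrite set11. Qed.

Lemma exF m d : m + d < 2 ^ m -> exists F : {set {set 'I_m}},
  [/\ #|F| = m + d, set0 \notin F & forall i, [set i] \in F].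
Proof.
elim: d => [|d IH] H.
  exists [set [set i] | i : 'I_m]; split.
  - by rewrite card_imset ?card_ord ?addn0 //; exact: set1_inj.
  - apply/imsetP => [[i _ /eqP]]; by rewrite eq_sym (negbTE (set1_neq0 i)).
  - by move=> i; apply: imset_f.
have H' : m + d < 2 ^ m by apply: ltnW; rewrite -addnS.
have [F [cF F0 F1]] := IH H'.
have : ~~ ([set: {set 'I_m}] \subset set0 |: F).
  apply/negP => /subset_leq_card.
  rewrite cardsT -cardsT -powersetT card_powerset cardsT card_ord cardsU1 cF.
  move=> H2; rewrite F0 add1n in H2.
  by have := leq_trans H H2; rewrite addnS ltnS ltnn.
case/subsetPn => T _; rewrite in_setU1 negb_or => /andP [T0 TF].
exists (T |: F); split.
- by rewrite cardsU1 TF cF add1n addnS.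
- by rewrite in_setU1 negb_or eq_sym T0.
- by move=> i; rewrite in_setU1 F1 orbT.
Qed.

Section Part1.
Variable m : nat.
Variable F : {set {set 'I_m}}.
Hypothesis hF0 : set0 \notin F.
Hypothesis hF1 : forall i, [set i] \in F.

Definition Al := ({set 'I_m} + 'I_m)%type.
Definition Q := option 'I_m.

Definition ntrans (q : Q) (a : Al) : {set Q} :=
  match q, a with
  | None, inl T => if T \in F then Some @: T else set0
  | None, inr _ => [set None]
  | Some _, inl _ => set0
  | Some i, inr j => if j == i then [set Some i] else set0
  end.

Definition N : nfa Al := @NFA Al Q None setT ntrans.

Definition FS := {T : {set 'I_m} | T \in F}.
Definition S := option (option FS).

Definition toS (T : {set 'I_m}) : S :=
  if insub T is Some u then Some (Some u) else None.

Definition dtrans (s : S) (a : Al) : S :=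
  match s, a with
  | None, _ => None
  | Some None, inl T => toS T
  | Some None, inr _ => Some None
  | Some (Some _), inl _ => None
  | Some (Some u), inr j => if j \in val u then toS [set j] else None
  end.

Definition D : dfa Al := @DFA Al S (Some None) [set s | s != None] dtrans.

Definition rep (s : S) : {set Q} :=
  match s with
  | None => set0
  | Some None => [set None]
  | Some (Some u) => Some @: val u
  end.

Lemma toS_notin T : T \notin F -> toS T = None.
Proof. by move=> h; rewrite /toS; case: insubP => // u; rewrite (negbTE h). Qed.

Lemma toS_in T (h : T \in F) : toS T = Some (Some (Sub T h)).
Proof. by rewrite /toS insubT. Qed.

Lemma rep_toS T : rep (toS T) = if T \in F then Some @: T else set0.
Proof. by case: ifP => h; [rewrite (toS_in h) | rewrite toS_notin ?h]. Qed.

Lemma step s a : \bigcup_(q in rep s) (@nfa_trans Al N) q a = rep (dtrans s a).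
Proof.
case: s => [[u|]|] /=; last by rewrite big_set0.
- case: a => [T|j] /=.
    apply/setP => x; rewrite in_set0; apply/bigcupP => [[q /imsetP [i _ ->]]].
    by rewrite inE.
  case: ifP => ju.
    rewrite rep_toS hF1 imset_set1.
    apply/setP => x; rewrite inE; apply/bigcupP/eqP => [[q /imsetP [i iu ->]]|->].
      by rewrite /=; case: eqP => [-> |]; rewrite inE // => /eqP.
    exists (Some j); first by apply/imsetP; exists j.
    by rewrite /= eqxx set11.
  apply/setP => x; rewrite in_set0; apply/bigcupP => [[q /imsetP [i iu ->]]] /=.
  by case: eqP => [ji|]; [move: ju; rewrite ji iu | rewrite inE].
- rewrite big_set1; case: a => [T|j] //=.
  by rewrite rep_toS.
Qed.

Lemma run_rep s w : @nfa_run Al N (rep s) w = rep (foldl dtrans s w).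
Proof. by elim: w s => //= a w IH s; rewrite step IH. Qed.

Lemma rep_eq0 s : (rep s != set0) = (s != None).
Proof.
case: s => [[u|]|] /=; last by rewrite eqxx.
  rewrite imset_eq0 /=; apply: contraNneq hF0 => <-; exact: valP u.
by rewrite set1_neq0.
Qed.

Lemma langN w : nfa_lang N w = (foldl dtrans (Some None) w != None).
Proof.
rewrite /nfa_lang -rep_eq0 -run_rep /=.
apply/existsP/set0Pn => [[q /andP [qr _]]|[q qr]]; exists q => //.
by rewrite qr inE.
Qed.

Lemma langD w : dfa_lang D w = nfa_lang N w.
Proof. by rewrite langN /dfa_lang inE. Qed.

Lemma sink w : foldl dtrans None w = None.
Proof. by elim: w. Qed.

Lemma contain w s : s != None -> foldl dtrans s w != None ->
  foldl dtrans (Some None) w != None.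
Proof.
elim: w s => [|a w IH] s //= sN h.
have dN : dtrans s a != None.
  by apply: contraNneq h => ->; rewrite sink.
case: a h dN => [T|j] h dN /=.
  by case: s sN h dN => [[u|]|] //.
exact: IH dN h.
Qed.

Lemma infixN : infix_closed (nfa_lang N).
Proof.
move=> x y z; rewrite !langN foldl_cat => h.
have xN : foldl dtrans (Some None) x != None.
  by apply: contraNneq h => ->; rewrite !sink.
have := contain xN h; rewrite foldl_cat.
by apply: contraNneq => ->; rewrite sink.
Qed.

Definition r (s : S) : seq Al :=
  match s with
  | None => [:: inl set0]
  | Some None => [::]
  | Some (Some u) => [:: inl (val u)]
  end.

Lemma r_ok s : foldl (@dfa_trans Al D) (dfa_init D) (r s) = s.
Proof.
case: s => [[u|]|] //=.
  by rewrite /toS valK.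
by rewrite toS_notin.
Qed.

Lemma dist (s t : dfa_state D) : (forall v, dacc s v = dacc t v) -> s = t.
Proof.
have E s' v : dacc (D:=D) s' v = (foldl dtrans s' v != None) by rewrite /dacc inE.
move=> H; have H0 := H [::]; rewrite !E /= in H0.
case: s t H H0 => [[u|]|] [[u'|]|] // H _.
- congr (Some (Some _)); apply: val_inj; apply/setP => j.
  have := H [:: inr j]; rewrite !E /=.
  by case: (j \in val u); case: (j \in val u'); rewrite // (toS_in (hF1 j)).
- have := H [:: inl (val u)]; by rewrite !E /= /toS valK.
- have := H [:: inl (val u')]; by rewrite !E /= /toS valK.
Qed.

Lemma acc2 i b : foldl dtrans (Some None) [:: inl [set i]; b] =
  match b with inl _ => None | inr j => if j == i then toS [set j] else None end.
Proof.
rewrite /= (toS_in (hF1 i)) /=; case: b => // j.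
by rewrite inE.
Qed.

Lemma minN : nfa_minimal N.
Proof.
move=> M HM.
pose x (p : option 'I_m) : seq Al := if p is Some i then [:: inl [set i]] else [::].
pose y (p : option 'I_m) : seq Al := if p is Some i then [:: inr i] else
   if [pick i : 'I_m] is Some i0 then [:: inl [set i0]] else [::].
rewrite /nfa_size /=.
apply: (fooling (I := option 'I_m) (x := x) (y := y)) => [p|p q].
  rewrite HM langN; case: p => [i|] /=.
    by rewrite (toS_in (hF1 i)) /= inE eqxx (toS_in (hF1 i)).
  by case: pickP => // i0 _ /=; rewrite (toS_in (hF1 i0)).
rewrite !HM !langN.
case: p => [i|]; case: q => [j|] // ne /=.
- rewrite (toS_in (hF1 i)) (toS_in (hF1 j)) /= !inE.
  have ij : i != j by apply: contraNneq ne => ->.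
  have ji : j != i by rewrite eq_sym.
  by rewrite (negbTE ij) (negbTE ji).
- case: pickP => [i0 _|H]; last by have := H i.
  by rewrite /= (toS_in (hF1 i)).
- case: pickP => [i0 _|H]; last by have := H j.
  by rewrite /= (toS_in (hF1 j)).
Qed.

Lemma sizeN : nfa_size N = m.+1.
Proof. by rewrite /nfa_size /= card_option card_ord. Qed.

Lemma sizeD : dfa_size D = #|F|.+2.
Proof. by rewrite /dfa_size /= !card_option card_sig. Qed.

Lemma minD : min_dfa_size (nfa_lang N) #|F|.+2.
Proof.
split; first by exists D; split; [exact: sizeD | exact: langD].
move=> D' HD'; rewrite -sizeD; apply: (@dfa_lower Al D D' r).
- exact: r_ok.
- exact: dist.
- by move=> w; rewrite HD' langD.
Qed.

End Part1.

Theorem mainTheorem7 :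
  (forall n alpha : nat, 1 <= n -> n < alpha -> alpha <= 2 ^ (n - 1) + 1 ->
     exists (A : finType) (N : nfa A),
       [/\ nfa_size N = n, nfa_minimal N, infix_closed (nfa_lang N)
         & min_dfa_size (nfa_lang N) alpha]) /\
  (forall (A : finType) (N : nfa A) (n : nat),
     nfa_size N = n -> nfa_minimal N -> infix_closed (nfa_lang N) ->
     min_dfa_size (nfa_lang N) n -> n = 1).
Proof.
split; last by move=> A N0 n; exact: part2.
move=> n alpha n1 na ha.
set m := n - 1.
have hm : m + (alpha - 2 - m) < 2 ^ m.
  move: ha; rewrite -/m; have : 0 < 2 ^ m by rewrite expn_gt0.
  lia.
have [F [cF F0 F1]] := exF hm.
exists (Al m), (N F); split.
- by rewrite sizeN /m; lia.
- exact: minN.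
- exact: infixN.
- have -> : alpha = #|F|.+2 by rewrite cF /m; lia.
  exact: minD.
Qed.
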